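(* Let $(G,S,C,\phi_0)$ be a minimal counterexample, and let $f=[uvw]$ be a $3$-face of $G$ with $d(u)=d(w)=3$ and $u,w\notin S$. Then every edge $e$ of $f$ is full, i.e., $C_e$ is a perfect matching.
   Context: All graphs are finite and simple. Two cycles are adjacent if they share at least one common edge. A $3$-correspondence assignment for $G$ consists of the list $L(u)=\{1,2,3\}$ for each vertex together with, for each edge $e=uv$, a matching $C_e$ (not necessarily perfect) between $\{u\}\times\{1,2,3\}$ and $\{v\}\times\{1,2,3\}$. A $C$-coloring is a map $\phi$ to $\{1,2,3\}$ with $(u,\phi(u))(v,\phi(v))\notin E(C_{uv})$ for every edge $uv$. For a closed walk $v_1\dots v_m$ ($v_m=v_1$), $C$ is inconsistent on it if there are colors $c_i$ with $(v_i,c_i)(v_{i+1},c_{i+1})\in E(C_{v_iv_{i+1}})$ for all $i\in[m-1]$ and $c_1\ne c_m$. A counterexample is a quadruple $(G,S,C,\phi_0)$ where $G$ is a plane graph with no two adjacent cycles of length at most $8$, $S\subseteq V(G)$ with $|S|\le 12$ is either a single vertex or the vertex set of the boundary of a face, $C$ is a $3$-correspondence assignment consistent on every closed walk of length $3$, and $\phi_0$ is a $C$-coloring of $G[S]$ that does not extend to a $C$-coloring of $G$. A minimal counterexample is a counterexample minimizing $|V(G)|$, subject to that minimizing $|E(G)|-|E(G[S])|$, and subject to both maximizing $\sum_{uv\in E(G)}|E(C_{uv})|$. A $k$-face is a face whose boundary has $k$ vertices; $[v_1\dots v_k]$ denotes the face with boundary vertices in this cyclic order. *)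

(* Defs.v *)
From HB Require Import structures.
From mathcomp Require Import all_boot all_order all_algebra.
From mathcomp Require Import classical_sets boolp reals topology normedtype.
Import numFieldNormedType.Exports.
Set Implicit Arguments. Unset Strict Implicit. Unset Printing Implicit Defensive.
Import Order.TTheory GRing.Theory Num.Theory.
Local Open Scope classical_set_scope.
Local Open Scope ring_scope.

Section PlaneGraphs.
Variable R : realType.
Local Notation pt := (R * R)%type.

Definition unit_itv : set R := [set t | 0 <= t <= 1].
Definition open_unit_itv : set R := [set t | 0 < t < 1].

(** A graph on vertex set 'I_n with adjacency [adj]; drawn in the plane with
    vertex positions [pos] and, for every pair u < v, an arc [arc u v] from
    pos u to pos v parametrized by [0,1].  [earc u v] is the arc oriented from
    u to v for any order of u, v. *)
Definition earc n (arc : 'I_n -> 'I_n -> R -> pt) (u v : 'I_n) : R -> pt :=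
  if (u < v)%N then arc u v else (fun t => arc v u (1 - t)).

Definition edge_pts n (arc : 'I_n -> 'I_n -> R -> pt) (u v : 'I_n) : set pt :=
  earc arc u v @` unit_itv.

Definition plane_graph n (adj : rel 'I_n) (pos : 'I_n -> pt)
    (arc : 'I_n -> 'I_n -> R -> pt) : Prop :=
  [/\ (forall u v, adj u v = adj v u),
      (forall u, ~~ adj u u),
      injective pos,
      (forall u v, adj u v ->
         [/\ {within unit_itv, continuous (earc arc u v)},
             (forall s t, unit_itv s -> unit_itv t ->
                earc arc u v s = earc arc u v t -> s = t),
             earc arc u v 0 = pos u, earc arc u v 1 = pos v &
             (forall t w, open_unit_itv t -> earc arc u v t <> pos w)]) &
      (forall u v u' v', adj u v -> adj u' v' ->
         ~ ((u = u' /\ v = v') \/ (u = v' /\ v = u')) ->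
         forall s t, open_unit_itv s -> open_unit_itv t ->
         earc arc u v s <> earc arc u' v' t)].

Definition drawing n (adj : rel 'I_n) (pos : 'I_n -> pt)
    (arc : 'I_n -> 'I_n -> R -> pt) : set pt :=
  [set p | exists v, p = pos v] `|`
  [set p | exists u v, adj u v /\ edge_pts arc u v p].

Definition is_face n (adj : rel 'I_n) (pos : 'I_n -> pt)
    (arc : 'I_n -> 'I_n -> R -> pt) (F : set pt) : Prop :=
  exists2 x, ~ drawing adj pos arc x &
    F = connected_component (~` drawing adj pos arc) x.

(** A vertex lies on the boundary of the face F (F is open and disjoint from
    the drawing, so this is: pos v lies in the closure of F). *)
Definition on_face_boundary n (pos : 'I_n -> pt) (F : set pt) (v : 'I_n) : Prop :=
  closure F (pos v).

Definition edge_on_face n (arc : 'I_n -> 'I_n -> R -> pt) (F : set pt)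
    (u v : 'I_n) : Prop :=
  edge_pts arc u v `<=` closure F.

End PlaneGraphs.

Definition deg n (adj : rel 'I_n) (v : 'I_n) : nat := #|[set x | adj v x]%SET|.

(** A 3-correspondence assignment: lists are {1,2,3} (= 'I_3) for every vertex;
    [M u v c d] means (u,c)(v,d) is an edge of C_uv. *)
Definition corr3 n (adj : rel 'I_n) (M : 'I_n -> 'I_n -> 'I_3 -> 'I_3 -> bool) : Prop :=
  [/\ (forall u v c d, M u v c d = M v u d c),
      (forall u v c d, M u v c d -> adj u v) &
      (forall u v c d d', M u v c d -> M u v c d' -> d = d')].

Definition full_edge n (M : 'I_n -> 'I_n -> 'I_3 -> 'I_3 -> bool) (u v : 'I_n) : Prop :=
  (forall c, exists d, M u v c d) /\ (forall d, exists c, M u v c d).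

Definition closed_walk n (adj : rel 'I_n) (m : nat) (w : nat -> 'I_n) : Prop :=
  (forall i, (i < m)%N -> adj (w i) (w i.+1)) /\ w m = w 0%N.

Definition inconsistent_on n (M : 'I_n -> 'I_n -> 'I_3 -> 'I_3 -> bool)
    (m : nat) (w : nat -> 'I_n) : Prop :=
  exists c : nat -> 'I_3,
    (forall i, (i < m)%N -> M (w i) (w i.+1) (c i) (c i.+1)) /\ c 0%N <> c m.

Definition consistent_on_closed_walks_of_length n (adj : rel 'I_n)
    (M : 'I_n -> 'I_n -> 'I_3 -> 'I_3 -> bool) (m : nat) : Prop :=
  forall w, closed_walk adj m w -> ~ inconsistent_on M m w.

Definition is_C_coloring n (adj : rel 'I_n) (M : 'I_n -> 'I_n -> 'I_3 -> 'I_3 -> bool)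
    (phi : 'I_n -> 'I_3) : Prop :=
  forall u v, adj u v -> ~~ M u v (phi u) (phi v).

(** phi0 is a C-coloring of G[S] (its values outside S are irrelevant). *)
Definition is_C_coloring_on n (adj : rel 'I_n) (M : 'I_n -> 'I_n -> 'I_3 -> 'I_3 -> bool)
    (S : {set 'I_n}) (phi0 : 'I_n -> 'I_3) : Prop :=
  forall u v, u \in S -> v \in S -> adj u v -> ~~ M u v (phi0 u) (phi0 v).

Definition extends_to_C_coloring n (adj : rel 'I_n)
    (M : 'I_n -> 'I_n -> 'I_3 -> 'I_3 -> bool) (S : {set 'I_n}) (phi0 : 'I_n -> 'I_3) : Prop :=
  exists phi, is_C_coloring adj M phi /\ forall v, v \in S -> phi v = phi0 v.

Definition is_cycle n (adj : rel 'I_n) (c : seq 'I_n) : Prop :=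
  [/\ (3 <= size c)%N, uniq c & cycle adj c].

Definition cycle_edge n (c : seq 'I_n) (u v : 'I_n) : Prop :=
  exists2 i, (i < size c)%N &
    let x := nth u c i in let y := nth u c (i.+1 %% size c) in
    (x = u /\ y = v) \/ (x = v /\ y = u).

Definition same_cycle n (c1 c2 : seq 'I_n) : Prop :=
  forall u v, cycle_edge c1 u v <-> cycle_edge c2 u v.

Definition no_adjacent_short_cycles n (adj : rel 'I_n) : Prop :=
  forall c1 c2, is_cycle adj c1 -> is_cycle adj c2 ->
    (size c1 <= 8)%N -> (size c2 <= 8)%N -> ~ same_cycle c1 c2 ->
    ~ exists u v, cycle_edge c1 u v /\ cycle_edge c2 u v.

Definition counterexample (R : realType) n (adj : rel 'I_n) (pos : 'I_n -> (R * R)%type)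
    (arc : 'I_n -> 'I_n -> R -> (R * R)%type) (S : {set 'I_n})
    (M : 'I_n -> 'I_n -> 'I_3 -> 'I_3 -> bool) (phi0 : 'I_n -> 'I_3) : Prop :=
  [/\ plane_graph adj pos arc,
      no_adjacent_short_cycles adj,
      (#|S| <= 12)%N /\
        ((exists v, S = [set v]%SET) \/
         (exists F, is_face adj pos arc F /\
            forall v, v \in S <-> on_face_boundary pos F v)),
      corr3 adj M /\ consistent_on_closed_walks_of_length adj M 3 &
      is_C_coloring_on adj M S phi0 /\ ~ extends_to_C_coloring adj M S phi0].

Definition num_edges n (adj : rel 'I_n) : nat :=
  #|[set p : 'I_n * 'I_n | (p.1 < p.2)%N && adj p.1 p.2]%SET|.

Definition num_edges_in n (adj : rel 'I_n) (S : {set 'I_n}) : nat :=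
  #|[set p : 'I_n * 'I_n | [&& (p.1 < p.2)%N, adj p.1 p.2, p.1 \in S & p.2 \in S]]%SET|.

Definition corr_size n (adj : rel 'I_n) (M : 'I_n -> 'I_n -> 'I_3 -> 'I_3 -> bool) : nat :=
  \sum_(p : 'I_n * 'I_n | (p.1 < p.2)%N && adj p.1 p.2)
     #|[set cd : 'I_3 * 'I_3 | M p.1 p.2 cd.1 cd.2]%SET|.

(** Minimal counterexample: minimize |V(G)|, then |E(G)| - |E(G[S])|, then
    maximize the sum of |E(C_uv)|. *)
Definition minimal_counterexample (R : realType) n (adj : rel 'I_n)
    (pos : 'I_n -> (R * R)%type) (arc : 'I_n -> 'I_n -> R -> (R * R)%type)
    (S : {set 'I_n}) (M : 'I_n -> 'I_n -> 'I_3 -> 'I_3 -> bool)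
    (phi0 : 'I_n -> 'I_3) : Prop :=
  counterexample adj pos arc S M phi0 /\
  forall n' (adj' : rel 'I_n') (pos' : 'I_n' -> (R * R)%type)
         (arc' : 'I_n' -> 'I_n' -> R -> (R * R)%type) (S' : {set 'I_n'})
         (M' : 'I_n' -> 'I_n' -> 'I_3 -> 'I_3 -> bool) (phi0' : 'I_n' -> 'I_3),
    counterexample adj' pos' arc' S' M' phi0' ->
    [/\ (n <= n')%N,
        n' = n -> (num_edges adj - num_edges_in adj S <=
                   num_edges adj' - num_edges_in adj' S')%N &
        n' = n -> (num_edges adj' - num_edges_in adj' S')%N =
                  (num_edges adj - num_edges_in adj S)%N ->
        (corr_size adj' M' <= corr_size adj M)%N].

(* Main.v *)
Require Import Defs.
From HB Require Import structures.
From mathcomp Require Import all_boot all_order all_algebra.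
From mathcomp Require Import classical_sets boolp reals topology normedtype.
Import numFieldNormedType.Exports.
From mathcomp Require Import zify.
Set Implicit Arguments. Unset Strict Implicit. Unset Printing Implicit Defensive.

Definition o0 : 'I_3 := @Ordinal 3 0 isT.
Definition o1 : 'I_3 := @Ordinal 3 1 isT.
Definition o2 : 'I_3 := @Ordinal 3 2 isT.
Definition E3 : seq 'I_3 := [:: o0; o1; o2].
Definition P9 : seq ('I_3 * 'I_3) := [seq (c, d) | c <- E3, d <- E3].
Definition optl : seq (option 'I_3) := None :: [seq Some i | i <- E3].
Definition eqi (a b : 'I_3) : bool := Nat.eqb a b.
Definition eqo (x y : option 'I_3) : bool :=
  match x, y with Some a, Some b => eqi a b | None, None => true | _, _ => false end.
Definition trip := (option 'I_3 * option 'I_3 * option 'I_3)%type.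
Definition tget (t : trip) (c : 'I_3) : option 'I_3 :=
  match nat_of_ord c with 0 => t.1.1 | 1 => t.1.2 | _ => t.2 end.
Definition relOf (t : trip) (c d : 'I_3) : bool := eqo (tget t c) (Some d).
Definition injb (t : trip) : bool :=
  all (fun c => all (fun c' => eqo (tget t c) (tget t c') ==> eqo (tget t c) None || eqi c c') E3) E3.
Definition fullb (t : trip) : bool :=
  all (fun c => ~~ eqo (tget t c) None) E3 && all (fun d => has (fun c => relOf t c d) E3) E3.
Definition allT : seq trip := [seq (xy, z) | xy <- [seq (x, y) | x <- optl, y <- optl], z <- optl].
Definition funsI : seq trip := seq.filter injb allT.
Definition tri := (trip * trip * trip)%type.
Definition trel (T : tri) (i j : 'I_3) (c d : 'I_3) : bool :=
  match nat_of_ord i, nat_of_ord j with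
  | 0, 1 => relOf T.1.1 c d
  | 1, 0 => relOf T.1.1 d c
  | 1, 2 => relOf T.1.2 c d
  | 2, 1 => relOf T.1.2 d c
  | 2, 0 => relOf T.2 c d
  | 0, 2 => relOf T.2 d c
  | _, _ => false end.
Definition cons6 (T : tri) : bool :=
  all (fun i0 => all (fun i1 => all (fun i2 =>
   [&& ~~ eqi i0 i1, ~~ eqi i1 i2 & ~~ eqi i2 i0] ==>
   all (fun c0 => all (fun c1 => all (fun c2 => all (fun c3 =>
     [&& trel T i0 i1 c0 c1, trel T i1 i2 c1 c2 & trel T i2 i0 c2 c3] ==> eqi c0 c3)
   E3) E3) E3) E3) E3) E3) E3.
Definition chain (t1 t2 t3 : trip) (c : 'I_3) : bool :=
  match tget t1 c with
  | Some p => match tget t2 p with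
              | Some b => match tget t3 b with Some a => eqi a c | None => true end
              | None => true end
  | None => true end.
Definition consF (T : tri) : bool :=
  all (fun c => [&& chain T.1.1 T.1.2 T.2 c, chain T.1.2 T.2 T.1.1 c & chain T.2 T.1.1 T.1.2 c]) E3.
Definition solvb (T : tri) (p : 'I_3) (fu fw : option 'I_3) : bool :=
  has (fun a => has (fun b => [&& ~~ eqo (Some a) fu, ~~ eqo (Some b) fw, ~~ trel T o0 o1 a p,
     ~~ trel T o1 o2 p b & ~~ trel T o2 o0 b a]) E3) E3.
Definition idxs : seq ('I_3 * option 'I_3 * option 'I_3) :=
  [seq (px, y) | px <- [seq (p, x) | p <- E3, x <- optl], y <- optl].
Definition solvList (T : tri) : seq bool := [seq solvb T q.1.1 q.1.2 q.2 | q <- idxs].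
Definition cntT (T : tri) (i j : 'I_3) : nat :=
  count (fun cd : 'I_3 * 'I_3 => trel T i j cd.1 cd.2) P9.
Definition fullT (T : tri) := [&& fullb T.1.1, fullb T.1.2 & fullb T.2].
Definition perms : seq trip := seq.filter fullb funsI.
Definition cands : seq tri :=
  [seq T <- [seq (ab, c) | ab <- [seq (a, b) | a <- perms, b <- perms], c <- perms] | cons6 T].
Definition candOK (T : tri) : bool :=
  all (fun i => all (fun j => ~~ eqi i j ==> Nat.eqb (cntT T i j) 3) E3) E3 &&
  all (fun i => all (fun j => all (fun c => all (fun d => all (fun d' =>
    trel T i j c d && trel T i j c d' ==> eqi d d') E3) E3) E3) E3) E3.
Definition checkC : bool := all candOK cands.
Definition checkT (T : tri) (C : seq (tri * seq bool)) : bool :=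
  consF T ==> (all (fun i => all (fun j => ~~ eqi i j ==> Nat.leb (cntT T i j) 3) E3) E3 &&
  (
    (~~ fullT T ==> has (fun i => has (fun j => [&& ~~ eqi i j, Nat.leb (cntT T i j) 2 & Nat.leb (cntT T j i) 2]) E3) E3) &&
    (let sT := solvList T in has (fun x => all2 implb x.2 sT) C))).
Definition checkAllC (C : seq (tri * seq bool)) : bool :=
  all (fun a => all (fun b => all (fun c => checkT (a, b, c) C) funsI) funsI) funsI.
Definition candL : seq (tri * seq bool) := [seq (T', solvList T') | T' <- cands].

Lemma checkC_ok : checkC = true. Proof. by vm_compute. Qed.

Lemma nEqbE m k : Nat.eqb m k = (m == k).
Proof. by elim: m k => [|m IH] [|k] //=; rewrite IH eqSS. Qed.

Lemma nLebE m k : Nat.leb m k = (m <= k).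
Proof. by elim: m k => [|m IH] [|k] //=; rewrite IH ltnS. Qed.

Lemma eqiE a b : eqi a b = (a == b).
Proof. by rewrite /eqi nEqbE. Qed.

Lemma eqoE x y : eqo x y = (x == y).
Proof. by case: x => [a|]; case: y => [b|] //=; rewrite eqiE. Qed.

Lemma mem_E3 (i : 'I_3) : i \in E3.
Proof.
by case: i => [[|[|[|k]]] Hk].
Qed.

Lemma mem_optl (x : option 'I_3) : x \in optl.
Proof. case: x => [a|] //; rewrite /optl in_cons; apply/orP; right; apply: map_f; exact: mem_E3. Qed.

Lemma mem_funsI t : injb t -> t \in funsI.
Proof.
move=> H; rewrite mem_filter H /= /allT.
case: t {H} => [[x y] z]; apply: (allpairs_f (fun xy z => (xy, z))); last exact: mem_optl.
by apply: (allpairs_f (fun x y => (x, y))); apply: mem_optl.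
Qed.

Lemma mem_idxs p x y : (p, x, y) \in idxs.
Proof.
apply: (allpairs_f (fun px y => (px, y))); last exact: mem_optl.
by apply: (allpairs_f (fun p x => (p, x))); [apply: mem_E3 | apply: mem_optl].
Qed.

Lemma all2_map_impl (A : eqType) (f g : A -> bool) s :
  all2 implb (map f s) (map g s) -> forall x, x \in s -> f x -> g x.
Proof.
elim: s => [|a s IH] //= /andP [Ha Hs] x; rewrite inE => /orP [/eqP ->|Hx].
  by move: Ha; case: (f a) => //= ->.
exact: IH.
Qed.

Lemma checkAll_ok : checkAllC candL = true. Proof. by vm_compute. Qed.

Lemma checkAllC_spec C : checkAllC C -> forall a b c, a \in funsI -> b \in funsI -> c \in funsI ->
  checkT (a, b, c) C.
Proof.
move=> /allP H a b c Ha Hb Hc.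
by move: (H a Ha) => /allP /(_ b Hb) /allP /(_ c Hc).
Qed.

Lemma tB (T : tri) (cs : seq tri) :
  has (fun x => all2 implb x.2 (solvList T)) [seq (T', solvList T') | T' <- cs] ->
  exists2 T', T' \in cs & forall p fu fw, solvb T' p fu fw -> solvb T p fu fw.
Proof.
move/hasP => [[T' sT'] /mapP [T'' HT'' [-> ->]] Hall0].
  have Hall : all2 implb (solvList T'') (solvList T) := Hall0.
  exists T''; first exact: HT''.
  move=> p fu fw Hs.
  exact: (all2_map_impl (f := fun q => solvb T'' q.1.1 q.1.2 q.2)
           (g := fun q => solvb T q.1.1 q.1.2 q.2) Hall (mem_idxs p fu fw)).
Qed.

Lemma tC (T : tri) :
 all (fun i => all (fun j => ~~ eqi i j ==> Nat.leb (cntT T i j) 3) E3) E3 ->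
 (forall i j, i != j -> cntT T i j <= 3).
Proof.
move=> H1 i j Hij; move/allP: H1 => /(_ i (mem_E3 i)) /allP /(_ j (mem_E3 j)).
  by rewrite eqiE Hij nLebE.
Qed.

Lemma tD (T : tri) :
 (~~ fullT T ==> has (fun i => has (fun j => [&& ~~ eqi i j, Nat.leb (cntT T i j) 2 & Nat.leb (cntT T j i) 2]) E3) E3) ->
 (~~ fullT T -> exists i j, [/\ i != j, cntT T i j <= 2 & cntT T j i <= 2]).
Proof.
move=> H2 Hnf; move: H2; rewrite Hnf implyTb => /hasP [i _ /hasP [j _]].
  by rewrite eqiE !nLebE => /and3P [Hij Hi Hj]; exists i, j.
Qed.

Lemma checkT_spec (T : tri) (cs : seq tri) :
  checkT T [seq (T', solvList T') | T' <- cs] -> consF T ->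
  [/\ (forall i j, i != j -> cntT T i j <= 3),
      (~~ fullT T -> exists i j, [/\ i != j, cntT T i j <= 2 & cntT T j i <= 2]) &
      exists2 T', T' \in cs & forall p fu fw, solvb T' p fu fw -> solvb T p fu fw].
Proof.
rewrite /checkT => + Hcons; rewrite Hcons implyTb => /andP [H1 /andP [H2 H3]].
split; [exact: tC H1 | exact: tD H2 | exact: tB H3].
Qed.

Lemma fin_main (T : tri) : injb T.1.1 -> injb T.1.2 -> injb T.2 -> consF T ->
  [/\ (forall i j, i != j -> cntT T i j <= 3),
      (~~ fullT T -> exists i j, [/\ i != j, cntT T i j <= 2 & cntT T j i <= 2]) &
      exists T', [/\ T' \in cands, candOK T' &
         forall p fu fw, solvb T' p fu fw -> solvb T p fu fw]].
Proof.
case: T => [[a b] c] Ha Hb Hc Hcons.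
have HH := checkAllC_spec checkAll_ok (mem_funsI Ha) (mem_funsI Hb) (mem_funsI Hc).
have [H1 H2 [T' HT' H3]] := checkT_spec HH Hcons.
split; [exact: H1 | exact: H2 | exists T'; split; [exact: HT' | | exact: H3]].
by move/allP: checkC_ok => /(_ T' HT').
Qed.

Lemma trel_sym T i j c d : trel T i j c d = trel T j i d c.
Proof. by case: i => [[|[|[|i]]] Hi]; case: j => [[|[|[|j]]] Hj]. Qed.

Lemma cons6P T : cons6 T -> forall i0 i1 i2 c0 c1 c2 c3, i0 != i1 -> i1 != i2 -> i2 != i0 ->
  trel T i0 i1 c0 c1 -> trel T i1 i2 c1 c2 -> trel T i2 i0 c2 c3 -> c0 = c3.
Proof.
move=> /allP H i0 i1 i2 c0 c1 c2 c3 H01 H12 H20 R1 R2 R3.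
move: (H i0 (mem_E3 i0)) => /allP /(_ i1 (mem_E3 i1)) /allP /(_ i2 (mem_E3 i2)).
have E : [&& ~~ eqi i0 i1, ~~ eqi i1 i2 & ~~ eqi i2 i0] by rewrite !eqiE H01 H12 H20.
rewrite E implyTb => /allP /(_ c0 (mem_E3 c0)) /allP /(_ c1 (mem_E3 c1))
  /allP /(_ c2 (mem_E3 c2)) /allP /(_ c3 (mem_E3 c3)).
by rewrite R1 R2 R3 eqiE => /eqP.
Qed.

Lemma candOK_cnt T i j : candOK T -> i != j -> cntT T i j = 3.
Proof.
case/andP => /allP H _ Hij.
by move: (H i (mem_E3 i)) => /allP /(_ j (mem_E3 j)); rewrite eqiE Hij nEqbE => /eqP.
Qed.

Lemma candOK_fun T i j c d d' : candOK T -> trel T i j c d -> trel T i j c d' -> d = d'.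
Proof.
case/andP => _ /allP H R1 R2.
move: (H i (mem_E3 i)) => /allP /(_ j (mem_E3 j)) /allP /(_ c (mem_E3 c))
  /allP /(_ d (mem_E3 d)) /allP /(_ d' (mem_E3 d')).
by rewrite R1 R2 eqiE => /eqP.
Qed.

Lemma card_count (P : pred ('I_3 * 'I_3)) : #|[set cd | P cd]| = count P P9.
Proof.
rewrite cardsE cardE /enum_mem size_filter -enumT.
apply/permP; apply: uniq_perm.
- exact: enum_uniq.
- by [].
- case=> c d; rewrite mem_enum; apply/esym.
  apply: (allpairs_f (fun c d => (c, d))); exact: mem_E3.
Qed.

Section Tri.
Variables (n : nat) (adj : rel 'I_n) (M : 'I_n -> 'I_n -> 'I_3 -> 'I_3 -> bool) (u v w : 'I_n).
Hypothesis adj_sym : forall x y, adj x y = adj y x.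
Hypothesis adj_irr : forall x, ~~ adj x x.
Hypothesis Mcorr : corr3 adj M.
Hypothesis Mcons : consistent_on_closed_walks_of_length adj M 3.
Hypothesis noadj : no_adjacent_short_cycles adj.
Hypotheses (Huv : u != v) (Hvw : v != w) (Hwu : w != u).
Hypotheses (Auv : adj u v) (Avw : adj v w) (Awu : adj w u).

Lemma Msym x y c d : M x y c d = M y x d c.
Proof. by case: Mcorr. Qed.
Lemma Madj x y c d : M x y c d -> adj x y.
Proof. by case: Mcorr => _ H _; apply: H. Qed.
Lemma Mfun x y c d d' : M x y c d -> M x y c d' -> d = d'.
Proof. by case: Mcorr => _ _ H; apply: H. Qed.
Lemma Minj x y c c' d : M x y c d -> M x y c' d -> c = c'.
Proof. by rewrite !(Msym x y) => H1 H2; apply: (Mfun H1 H2). Qed.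

Definition vert (i : 'I_3) : 'I_n := match nat_of_ord i with 0 => u | 1 => v | _ => w end.

Lemma vert_inj : injective vert.
Proof.
move=> [[|[|[|i]]] Hi] [[|[|[|j]]] Hj] //; rewrite /vert /= => H;
  try (by apply: val_inj); by move: Huv Hvw Hwu; rewrite H ?eqxx.
Qed.

Lemma vert_neq i j : i != j -> vert i != vert j.
Proof. by apply: contra => /eqP /vert_inj ->. Qed.

Lemma adj_vert i j : i != j -> adj (vert i) (vert j).
Proof.
case: i => [[|[|[|i]]] Hi]; case: j => [[|[|[|j]]] Hj] // H; rewrite /vert /=;
  first [done | by rewrite adj_sym | by move: H; rewrite -(inj_eq val_inj) /= eqxx].
Qed.

Definition pickv (x : 'I_n) : option 'I_3 := [pick i | vert i == x].

Lemma pickvS x i : pickv x = Some i -> x = vert i.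
Proof. by rewrite /pickv; case: pickP => // j /eqP <- [->]. Qed.

Lemma pickv_vert i : pickv (vert i) = Some i.
Proof.
rewrite /pickv; case: pickP => [j /eqP /vert_inj -> //|].
by move=> /(_ i); rewrite eqxx.
Qed.

Lemma pickvN x : pickv x = None -> forall i, x != vert i.
Proof. by move=> Hx i; apply/eqP => E; move: Hx; rewrite E pickv_vert. Qed.

Definition pk x y c : option 'I_3 := [pick d | M x y c d].
Definition conv x y : trip := (pk x y o0, pk x y o1, pk x y o2).

Lemma tget_conv x y c : tget (conv x y) c = pk x y c.
Proof.
case: c => [[|[|[|c]]] Hc] //=; rewrite /conv /=; congr pk; exact: val_inj.
Qed.

Lemma relOf_conv x y c d : relOf (conv x y) c d = M x y c d.
Proof.
rewrite /relOf tget_conv /pk eqoE; case: pickP => [d' Hd'|H].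
  apply/idP/idP => [/eqP [<-] //|Hd]; by rewrite (Mfun Hd' Hd).
by rewrite H.
Qed.

Lemma injb_conv x y : injb (conv x y).
Proof.
apply/allP => c _; apply/allP => c' _; apply/implyP; rewrite !eqoE !eqiE.
case E: (tget (conv x y) c) => [d|] //= /eqP E'.
have H1 : relOf (conv x y) c d by rewrite /relOf E eqoE.
have H2 : relOf (conv x y) c' d by rewrite /relOf -E' eqoE.
rewrite !relOf_conv in H1 H2.
by rewrite (Minj H1 H2) eqxx.
Qed.

Definition T0 : tri := (conv u v, conv v w, conv w u).

Lemma M_trel i j c d : i != j -> M (vert i) (vert j) c d = trel T0 i j c d.
Proof.
case: i => [[|[|[|i]]] Hi]; case: j => [[|[|[|j]]] Hj] //= H;
  by rewrite /trel /vert /= relOf_conv // Msym.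
Qed.

Lemma tri_cons x y z c0 c1 c2 c3 : adj x y -> adj y z -> adj z x ->
  M x y c0 c1 -> M y z c1 c2 -> M z x c2 c3 -> c0 = c3.
Proof.
move=> Axy Ayz Azx M1 M2 M3.
case: (eqVneq c0 c3) => // Hne; exfalso.
apply: (Mcons (w := fun k => nth x [:: x; y; z; x] k)).
  by split => // [[|[|[|k]]]].
exists (fun k => nth c0 [:: c0; c1; c2; c3] k); split => //.
  by case=> [|[|[|k]]].
by apply/eqP.
Qed.

Lemma consF_T0 : consF T0.
Proof.
apply/allP => c _; apply/and3P; split; rewrite /chain.
- case E1: (tget _ c) => [p|] //; case E2: (tget _ p) => [b|] //; case E3: (tget _ b) => [a|] //.
  have R1 : relOf T0.1.1 c p by rewrite /relOf E1 eqoE.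
  have R2 : relOf T0.1.2 p b by rewrite /relOf E2 eqoE.
  have R3 : relOf T0.2 b a by rewrite /relOf E3 eqoE.
  rewrite /T0 /= !relOf_conv in R1 R2 R3.
  by rewrite eqiE (tri_cons Auv Avw Awu R1 R2 R3).
- case E1: (tget _ c) => [p|] //; case E2: (tget _ p) => [b|] //; case E3: (tget _ b) => [a|] //.
  have R1 : relOf T0.1.2 c p by rewrite /relOf E1 eqoE.
  have R2 : relOf T0.2 p b by rewrite /relOf E2 eqoE.
  have R3 : relOf T0.1.1 b a by rewrite /relOf E3 eqoE.
  rewrite /T0 /= !relOf_conv in R1 R2 R3.
  by rewrite eqiE (tri_cons Avw Awu Auv R1 R2 R3).
- case E1: (tget _ c) => [p|] //; case E2: (tget _ p) => [b|] //; case E3: (tget _ b) => [a|] //.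
  have R1 : relOf T0.2 c p by rewrite /relOf E1 eqoE.
  have R2 : relOf T0.1.1 p b by rewrite /relOf E2 eqoE.
  have R3 : relOf T0.1.2 b a by rewrite /relOf E3 eqoE.
  rewrite /T0 /= !relOf_conv in R1 R2 R3.
  by rewrite eqiE (tri_cons Awu Auv Avw R1 R2 R3).
Qed.

Lemma tri_unique_gen a b c z : a != b -> b != c -> c != a ->
  adj a b -> adj b c -> adj c a -> adj a z -> adj b z -> z = c.
Proof.
move=> Hab Hbc Hca Aab Abc Aca Aaz Abz.
case: (eqVneq z c) => // Hzc; exfalso.
have Hza : z != a by apply/eqP => E; move: (adj_irr a); rewrite -{2}E Aaz.
have Hzb : z != b by apply/eqP => E; move: (adj_irr b); rewrite -{2}E Abz.
apply: (noadj (c1 := [:: a; b; c]) (c2 := [:: a; b; z])).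
- split => //=; last by rewrite Aab Abc Aca.
  by rewrite !inE negb_or Hab eq_sym Hca Hbc.
- split => //=; last by rewrite Aab Abz adj_sym Aaz.
  by rewrite !inE negb_or Hab eq_sym Hza eq_sym Hzb.
- by [].
- by [].
- move=> Hs.
  have : cycle_edge [:: a; b; z] b c.
    apply/Hs; exists 1 => //; by left.
  case=> [[|[|[|k]]] Hk] //= [[E1 E2]|[E1 E2]].
  + by move: Hab; rewrite E1 eqxx.
  + by move: Hca; rewrite E1 eqxx.
  + by move: Hzc; rewrite E2 eqxx.
  + by move: Hbc; rewrite E1 eqxx.
  + by move: Hca; rewrite E2 eqxx.
  + by move: Hzc; rewrite E1 eqxx.
- by exists a, b; split; exists 0 => //; left.
Qed.

Lemma tri_unique i j z : i != j -> adj (vert i) z -> adj (vert j) z -> exists k, z = vert k.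
Proof.
have G := fun a b c => @tri_unique_gen a b c z.
case: i => [[|[|[|i]]] Hi]; case: j => [[|[|[|j]]] Hj] // H; rewrite /vert /= => H1 H2.
- by exists o2; apply: (G u v w) => //; rewrite eq_sym.
- by exists o1; apply: (G w u v) => //; rewrite adj_sym.
- by exists o2; apply: (G v u w) => //; rewrite 1?eq_sym // adj_sym.
- by exists o0; apply: (G v w u).
- by exists o1; apply: (G u w v) => //; rewrite 1?eq_sym // adj_sym.
- by exists o0; apply: (G w v u) => //; rewrite 1?eq_sym // adj_sym.
all: by move: H; rewrite -(inj_eq val_inj) /= eqxx.
Qed.

Variable T' : tri.
Hypothesis HT'c : cons6 T'.
Hypothesis HT'ok : candOK T'.

Definition M' (x y : 'I_n) (c d : 'I_3) : bool :=
  match pickv x, pickv y with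
  | Some i, Some j => if i != j then trel T' i j c d else M x y c d
  | _, _ => M x y c d end.

Lemma M'_vert i j c d : i != j -> M' (vert i) (vert j) c d = trel T' i j c d.
Proof. by move=> H; rewrite /M' !pickv_vert H. Qed.

Lemma M'_M x y c d : (forall i j, i != j -> x = vert i -> y = vert j -> False) ->
  M' x y c d = M x y c d.
Proof.
move=> H; rewrite /M'; case Ex: (pickv x) => [i|] //; case Ey: (pickv y) => [j|] //.
case: ifP => // Hij; exfalso; exact: (H i j Hij (pickvS Ex) (pickvS Ey)).
Qed.

Lemma M'_None x y c d : pickv x = None \/ pickv y = None -> M' x y c d = M x y c d.
Proof. by rewrite /M' => -[->|->] //; case: (pickv x). Qed.

Lemma M'_third x y z c d : adj x z -> adj y z -> pickv z = None -> M' x y c d = M x y c d.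
Proof.
move=> Axz Ayz Hz; apply: M'_M => i j Hij Ex Ey.
rewrite Ex in Axz; rewrite Ey in Ayz.
have [k Ek] := tri_unique Hij Axz Ayz.
by move: (pickvN Hz k); rewrite Ek eqxx.
Qed.

Lemma corr3_M' : corr3 adj M'.
Proof.
split.
- move=> x y c d; rewrite /M'.
  case: (pickv x) => [i|]; case: (pickv y) => [j|]; try exact: Msym.
  rewrite eq_sym; case: ifP => _; [exact: trel_sym | exact: Msym].
- move=> x y c d; rewrite /M'.
  case Ex: (pickv x) => [i|]; case Ey: (pickv y) => [j|]; try exact: Madj.
  case: ifP => Hij; last exact: Madj.
  by move=> _; rewrite (pickvS Ex) (pickvS Ey); apply: adj_vert.
- move=> x y c d d'; rewrite /M'.
  case Ex: (pickv x) => [i|]; case Ey: (pickv y) => [j|]; try exact: Mfun.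
  case: ifP => Hij; last exact: Mfun.
  exact: candOK_fun.
Qed.

Lemma pickv_neq x y i j : adj x y -> pickv x = Some i -> pickv y = Some j -> i != j.
Proof.
move=> A Ex Ey; apply/eqP => E; move: A; rewrite (pickvS Ex) (pickvS Ey) E.
by move: (adj_irr (vert j)) => /negbTE ->.
Qed.

Lemma cons_M' : consistent_on_closed_walks_of_length adj M' 3.
Proof.
move=> wk [Hadj Hw3] [cc [Hcc Hne]]; apply: Hne.
have Axy := Hadj 0 isT; have Ayz := Hadj 1 isT; have Azx := Hadj 2 isT.
have M1 := Hcc 0 isT; have M2 := Hcc 1 isT; have M3 := Hcc 2 isT.
rewrite Hw3 in Azx M3.
move: Axy Ayz Azx M1 M2 M3.
move: (wk 0) (wk 1) (wk 2) => x y z Axy Ayz Azx M1 M2 M3.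
have Ayx : adj y x by rewrite adj_sym.
have Azy : adj z y by rewrite adj_sym.
have Axz : adj x z by rewrite adj_sym.
case Ex: (pickv x) => [i|]; last first.
  rewrite M'_None in M1; last by left.
  rewrite (M'_third _ _ Ayx Azx Ex) in M2.
  rewrite M'_None in M3; last by right.
  exact: tri_cons M1 M2 M3.
case Ey: (pickv y) => [j|]; last first.
  rewrite M'_None in M1; last by right.
  rewrite M'_None in M2; last by left.
  rewrite (M'_third _ _ Azy Axy Ey) in M3.
  exact: tri_cons M1 M2 M3.
case Ez: (pickv z) => [k|]; last first.
  rewrite (M'_third _ _ Axz Ayz Ez) in M1.
  rewrite M'_None in M2; last by right.
  rewrite M'_None in M3; last by left.
  exact: tri_cons M1 M2 M3.
have Hij := pickv_neq Axy Ex Ey; have Hjk := pickv_neq Ayz Ey Ez; have Hki := pickv_neq Azx Ez Ex.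
move: M1 M2 M3; rewrite (pickvS Ex) (pickvS Ey) (pickvS Ez).
rewrite !M'_vert // => M1 M2 M3.
exact: (cons6P HT'c Hij Hjk Hki M1 M2 M3).
Qed.

Lemma full_conv x y : fullb (conv x y) -> full_edge M x y.
Proof.
case/andP => /allP H1 /allP H2; split.
- move=> c; move: (H1 c (mem_E3 c)); rewrite tget_conv /pk eqoE.
  by case: pickP => // d Hd _; exists d.
- move=> d; move: (H2 d (mem_E3 d)) => /hasP [c _]; rewrite relOf_conv => Hc.
  by exists c.
Qed.

Lemma pickv_none x : x != u -> x != v -> x != w -> pickv x = None.
Proof.
move=> H1 H2 H3; case E: (pickv x) => [i|] //; move: (pickvS E) => Ex.
by move: H1 H2 H3; rewrite Ex; case: i {E Ex} => [[|[|[|i]]] Hi]; rewrite /vert /= eqxx // andbF.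
Qed.

Lemma vert_mid i : vert i != u -> vert i != w -> i = o1.
Proof.
by case: i => [[|[|[|i]]] Hi]; rewrite /vert /= ?eqxx //= => _ _; apply: val_inj.
Qed.

Lemma M'_M_mid2 x y c d : x != u -> x != w -> y != u -> y != w -> M' x y c d = M x y c d.
Proof.
move=> H1 H2 H3 H4; apply: M'_M => i j Hij Ex Ey.
rewrite Ex in H1 H2; rewrite Ey in H3 H4.
by move: Hij; rewrite (vert_mid H1 H2) (vert_mid H3 H4) eqxx.
Qed.

Definition Nset (a b1 b2 : 'I_n) : {set 'I_n} := [set x | adj a x] :\ b1 :\ b2.
Definition forb (a b1 b2 : 'I_n) (psi : 'I_n -> 'I_3) : option 'I_3 :=
  if [pick x in Nset a b1 b2] is Some x then [pick al | M a x al (psi x)] else None.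

Lemma forb1 a b1 b2 psi al :
  (forall x, x \in Nset a b1 b2 -> ~~ M a x al (psi x)) -> Some al != forb a b1 b2 psi.
Proof.
move=> H; rewrite /forb; case: pickP => // x Hx.
case: pickP => // al' Hal'; apply/eqP => -[E]; rewrite -E in Hal'.
by move: (H x Hx); rewrite Hal'.
Qed.

Lemma forb2 a b1 b2 psi al : #|Nset a b1 b2| <= 1 -> Some al != forb a b1 b2 psi ->
  forall x, x \in Nset a b1 b2 -> ~~ M a x al (psi x).
Proof.
move=> Hc; rewrite /forb; case: pickP => [x0 Hx0|H0]; last by move=> _ x; rewrite H0.
move=> Hne x Hx; move/card_le1P: Hc => /(_ x0 Hx0 x); rewrite Hx inE => /esym /eqP Ex.
rewrite Ex; apply/negP => HM; move: Hne; case: pickP => [al' Hal'|/(_ al)]; last by rewrite HM.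
by rewrite (Minj Hal' HM) eqxx.
Qed.

Lemma Ncard a b1 b2 : deg adj a = 3 -> adj a b1 -> adj a b2 -> b1 != b2 -> #|Nset a b1 b2| <= 1.
Proof.
rewrite /deg /Nset => Hd A1 A2 H12.
move: Hd; rewrite (cardsD1 b1) inE A1 (cardsD1 b2 (_ :\ b1)) !inE eq_sym H12 A2 /=.
by move=> [<-].
Qed.

Lemma sum_lt (I : finType) (P : pred I) (F G : I -> nat) p0 :
  (forall p, P p -> F p <= G p) -> P p0 -> F p0 < G p0 ->
  \sum_(p | P p) F p < \sum_(p | P p) G p.
Proof.
move=> H Hp0 Hlt; rewrite (bigD1 p0) //= [X in _ < X](bigD1 p0) //=.
rewrite -addSn; apply: leq_add => //; apply: leq_sum => p /andP [Hp _]; exact: H.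
Qed.

Lemma K_tri (r : 'I_n -> 'I_n -> 'I_3 -> 'I_3 -> bool) (T : tri) i j :
  (forall c d, r (vert i) (vert j) c d = trel T i j c d) ->
  #|[set cd : 'I_3 * 'I_3 | r (vert i) (vert j) cd.1 cd.2]| = cntT T i j.
Proof. by move=> H; rewrite card_count /cntT; apply: eq_count => -[c d] /=; rewrite H. Qed.

Lemma corr_lt : (forall i j, i != j -> cntT T0 i j <= 3) ->
  (exists i j, [/\ i != j, cntT T0 i j <= 2 & cntT T0 j i <= 2]) ->
  corr_size adj M < corr_size adj M'.
Proof.
move=> Hle [i0 [j0 [Hij0 Hi0 Hj0]]].
pose K r (p : 'I_n * 'I_n) := #|[set cd : 'I_3 * 'I_3 | r p.1 p.2 cd.1 cd.2]|.
have Hgen : forall p, K M p <= K M' p.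
  case=> x y; rewrite /K /=.
  case Ex: (pickv x) => [i|]; last first.
    by apply: eq_leq; apply: eq_card => cd; rewrite !inE M'_None //; left.
  case Ey: (pickv y) => [j|]; last first.
    by apply: eq_leq; apply: eq_card => cd; rewrite !inE M'_None //; right.
  case: (eqVneq i j) => Hij.
    by apply: eq_leq; apply: eq_card => cd; rewrite !inE /M' Ex Ey Hij eqxx.
  rewrite (pickvS Ex) (pickvS Ey).
  rewrite (K_tri (T := T0)); last by move=> c d; apply: M_trel.
  rewrite (K_tri (T := T')); last by move=> c d; apply: M'_vert.
  by rewrite (candOK_cnt HT'ok Hij) Hle.
have Hsp : forall i j, i != j -> K M (vert i, vert j) < K M' (vert i, vert j) ->
   K M (vert j, vert i) < K M' (vert j, vert i) -> corr_size adj M < corr_size adj M'.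
  move=> i j Hij L1 L2; rewrite /corr_size.
  case: (ltngtP (vert i) (vert j)) => Hv.
  - apply: (sum_lt (p0 := (vert i, vert j))) => //=; last by rewrite Hv adj_vert.
    by move=> p _; apply: Hgen.
  - apply: (sum_lt (p0 := (vert j, vert i))) => //=; last by rewrite Hv adj_vert // eq_sym.
    by move=> p _; apply: Hgen.
  - by move: (vert_neq Hij); rewrite (val_inj Hv) eqxx.
apply: (Hsp i0 j0 Hij0).
- rewrite /K /= (K_tri (T := T0)); last by move=> c d; apply: M_trel.
  rewrite (K_tri (T := T')); last by move=> c d; apply: M'_vert.
  by rewrite (candOK_cnt HT'ok Hij0).
- have Hji : j0 != i0 by rewrite eq_sym.
  rewrite /K /= (K_tri (T := T0)); last by move=> c d; apply: M_trel.
  rewrite (K_tri (T := T')); last by move=> c d; apply: M'_vert.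
  by rewrite (candOK_cnt HT'ok Hji).
Qed.

Variables (S : {set 'I_n}) (phi0 : 'I_n -> 'I_3).
Hypotheses (uS : u \notin S) (wS : w \notin S) (degu : deg adj u = 3) (degw : deg adj w = 3).
Hypothesis Hsolv : forall p fu fw, solvb T' p fu fw -> solvb T0 p fu fw.

Lemma col_M' : is_C_coloring_on adj M S phi0 -> is_C_coloring_on adj M' S phi0.
Proof.
move=> H x y Hx Hy Axy; rewrite M'_M_mid2; first exact: H.
- by apply/eqP => E; move: uS; rewrite -E Hx.
- by apply/eqP => E; move: wS; rewrite -E Hx.
- by apply/eqP => E; move: uS; rewrite -E Hy.
- by apply/eqP => E; move: wS; rewrite -E Hy.
Qed.

Lemma noext_M' : ~ extends_to_C_coloring adj M S phi0 -> ~ extends_to_C_coloring adj M' S phi0.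
Proof.
move=> Hno [psi [Hpsi Hext]]; apply: Hno.
have vu : (v == u) = false by rewrite eq_sym (negbTE Huv).
have vw : (v == w) = false := negbTE Hvw.
have wu : (w == u) = false := negbTE Hwu.
have uw : (u == w) = false by rewrite eq_sym wu.
have Auw : adj u w by rewrite adj_sym.
have Awv : adj w v by rewrite adj_sym.
have nirr : forall a x, adj a x -> x != a.
  by move=> a x Ax; apply/eqP => E; move: (adj_irr a); rewrite -{2}E Ax.
set fu := forb u v w psi; set fw := forb w u v psi.
have Su : Some (psi u) != fu.
  apply: forb1 => x; rewrite !inE => /and3P [Hxw Hxv Ax].
  rewrite -(M'_None (psi u) (psi x)); first exact: Hpsi.
  by right; apply: pickv_none => //; apply: nirr.
have Sw : Some (psi w) != fw.
  apply: forb1 => x; rewrite !inE => /and3P [Hxv Hxu Ax].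
  rewrite -(M'_None (psi w) (psi x)); first exact: Hpsi.
  by right; apply: pickv_none => //; apply: nirr.
have HsT' : solvb T' (psi v) fu fw.
  apply/hasP; exists (psi u); first exact: mem_E3.
  apply/hasP; exists (psi w); first exact: mem_E3.
  have E1 : trel T' o0 o1 (psi u) (psi v) = M' u v (psi u) (psi v)
    := esym (@M'_vert o0 o1 (psi u) (psi v) isT).
  have E2 : trel T' o1 o2 (psi v) (psi w) = M' v w (psi v) (psi w)
    := esym (@M'_vert o1 o2 (psi v) (psi w) isT).
  have E3 : trel T' o2 o0 (psi w) (psi u) = M' w u (psi w) (psi u)
    := esym (@M'_vert o2 o0 (psi w) (psi u) isT).
  by rewrite !eqoE Su Sw E1 E2 E3 Hpsi // Hpsi // Hpsi.
have [al _ /hasP [be _ /and5P [Ha Hb H1 H2 H3]]] := hasP (Hsolv HsT').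
have H1' : ~~ M u v al (psi v) by move: H1; rewrite -(@M_trel o0 o1) //= => H; exact: H.
have H2' : ~~ M v w (psi v) be by move: H2; rewrite -(@M_trel o1 o2) //= => H; exact: H.
have H3' : ~~ M w u be al by move: H3; rewrite -(@M_trel o2 o0) //= => H; exact: H.
rewrite eqoE in Ha; rewrite eqoE in Hb.
have Sa := forb2 (Ncard degu Auv Auw Hvw) Ha.
have Sb := forb2 (Ncard degw Awu Awv Huv) Hb.
pose phi x := if x == u then al else if x == w then be else psi x.
exists phi; split; last first.
  move=> s Hs; rewrite /phi.
  case: eqP => [E|_]; first by move: uS; rewrite -E Hs.
  case: eqP => [E|_]; first by move: wS; rewrite -E Hs.
  exact: Hext.
have vnu : v != u by rewrite eq_sym.
have phu : phi u = al by rewrite /phi eqxx.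
have phw : phi w = be by rewrite /phi wu eqxx.
have pho : forall x, x != u -> x != w -> phi x = psi x.
  by move=> x H1x H2x; rewrite /phi (negbTE H1x) (negbTE H2x).
have key : forall x y, adj x y -> (x == u) || (x == w) || ((y != u) && (y != w)) ->
    ~~ M x y (phi x) (phi y).
  move=> x y Axy.
  case: (eqVneq x u) => [Ex|Hxu] /=.
    move=> _; rewrite Ex phu; rewrite Ex in Axy.
    case: (eqVneq y v) => [->|Hyv]; first by rewrite pho.
    case: (eqVneq y w) => [->|Hyw]; first by rewrite phw Msym.
    have Hyu := nirr _ _ Axy.
    rewrite pho //; apply: Sa.
    by rewrite !inE Hyw Hyv Axy.
  case: (eqVneq x w) => [Ex|Hxw] /=.
    move=> _; rewrite Ex phw; rewrite Ex in Axy.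
    case: (eqVneq y v) => [->|Hyv]; first by rewrite pho // Msym.
    case: (eqVneq y u) => [->|Hyu]; first by rewrite phu.
    have Hyw := nirr _ _ Axy.
    rewrite pho //; apply: Sb.
    by rewrite !inE Hyu Hyv Axy.
  move=> /andP [Hyu Hyw].
  rewrite !pho //.
  rewrite -(M'_M_mid2 (psi x) (psi y) Hxu Hxw Hyu Hyw); exact: Hpsi.
move=> x y Axy.
case: (boolP ((x == u) || (x == w) || ((y != u) && (y != w)))) => Hc; first exact: key.
rewrite Msym; apply: key; first by rewrite adj_sym.
by move: Hc; rewrite !negb_or negb_and !negbK => /andP [_ /orP [->|->]]; rewrite ?orbT.
Qed.

End Tri.

Unset Implicit Arguments.
Set Strict Implicit.

Theorem mainTheorem6 (R : realType) (n : nat) (adj : rel 'I_n)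
    (pos : 'I_n -> (R * R)%type) (arc : 'I_n -> 'I_n -> R -> (R * R)%type)
    (S : {set 'I_n}) (M : 'I_n -> 'I_n -> 'I_3 -> 'I_3 -> bool)
    (phi0 : 'I_n -> 'I_3) (F : set (R * R)%type) (u v w : 'I_n) :
  minimal_counterexample adj pos arc S M phi0 ->
  is_face adj pos arc F ->
  (* f = [uvw] is a 3-face: its boundary vertices are exactly u, v, w,
     in the cyclic order u, v, w (so uv, vw, wu are its edges) *)
  u != v -> v != w -> w != u ->
  (forall x, on_face_boundary pos F x <-> x \in [:: u; v; w]) ->
  adj u v -> adj v w -> adj w u ->
  edge_on_face arc F u v -> edge_on_face arc F v w -> edge_on_face arc F w u ->
  deg adj u = 3 -> deg adj w = 3 ->
  u \notin S -> w \notin S ->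
  full_edge M u v /\ full_edge M v w /\ full_edge M w u.
Proof.
move=> [Hce Hmin] _ Huv Hvw Hwu _ Auv Avw Awu _ _ _ degu degw uS wS.
case: (Hce) => Hplane Hnoadj HS [Hcorr Hcons] [Hcol Hnoext].
case: (Hplane) => adj_sym adj_irr _ _ _.
have [Hle Hnf [T' [HT'in HT'ok Hsolv]]] := @fin_main (T0 M u v w)
  (injb_conv Hcorr u v) (injb_conv Hcorr v w) (injb_conv Hcorr w u)
  (consF_T0 Hcorr Hcons Auv Avw Awu).
have HT'c : cons6 T' by move: HT'in; rewrite mem_filter => /andP [].
case Hfull: (fullT (T0 M u v w)).
  move: Hfull => /and3P [F1 F2 F3].
  split; first exact: (full_conv Hcorr F1).
  by split; [exact: (full_conv Hcorr F2) | exact: (full_conv Hcorr F3)].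
exfalso.
have Hce' : counterexample adj pos arc S (M' M u v w T') phi0.
  split => //.
  - split; first exact: (corr3_M' adj_sym Hcorr Auv Avw Awu HT'ok).
    exact: (cons_M' adj_sym adj_irr Hcons Hnoadj Huv Hvw Hwu Auv Avw Awu HT'c).
  - split; first exact: (col_M' v T' uS wS Hcol).
    exact: (noext_M' adj_sym adj_irr Hcorr Huv Hvw Hwu Auv Avw Awu uS wS degu degw Hsolv Hnoext).
have [_ _ H3] := Hmin n adj pos arc S _ phi0 Hce'.
have H3' := H3 erefl erefl.
have Hlt := corr_lt adj_sym Hcorr Huv Hvw Hwu Auv Avw Awu HT'ok Hle (Hnf (negbT Hfull)).
by move: Hlt; rewrite ltnNge H3'.
Qed.
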